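(* For every composition $\alpha$ there exists $K$ such that for all integers $k\ge K$ one has $\mathbf{S}^{(k)}_\alpha=\mathbf{S}_\alpha$ in $\mathsf{NSym}$; that is, $\mathbf{S}^{(k)}_\alpha\to\mathbf{S}_\alpha$ as $k\to\infty$.
   Context: Compositions are finite sequences of positive integers (possibly empty $\emptyset$); $k$-bounded means all parts $\le k$; $\lambda(\alpha)$ is the sorted partition. $\mathsf{NSym}=\mathbb{Q}\langle H_1,H_2,\dots\rangle$ (noncommuting generators), $\mathsf{NSym}_{(k)}$ its subalgebra generated by $H_1,\dots,H_k$. Box-adding operators: $t_1(\alpha)=[1,\alpha_1,\dots,\alpha_m]$; for $i\ge2$, $t_i(\alpha)$ replaces the leftmost part equal to $i-1$ by $i$ (undefined if none). $\beta//\alpha$ is a horizontal composition strip of size $n$ if $\beta=t_{i_n}\cdots t_{i_1}(\alpha)$ with $1\le i_1<\cdots<i_n$. The non-commutative Schur functions $\{\mathbf{S}_\alpha\}$ form the unique basis of $\mathsf{NSym}$ with $\mathbf{S}_\emptyset=1$ and $H_i\mathbf{S}_\alpha=\sum_\beta\mathbf{S}_\beta$ for all $i\ge1$, summed over $\beta$ with $\beta//\alpha$ a horizontal composition strip of size $i$. $k$-conjugation: hook length of cell $(i,j)$ of $\kappa$ is $\kappa_i-j+\kappa'_j-i+1$; a $(k+1)$-core has no cell of hook length $k+1$; $p(\kappa)$ has $i$-th part the number of cells in row $i$ with hook length $\le k$; $p$ is a bijection from $(k+1)$-cores to $k$-bounded partitions with inverse $c$; $\lambda^{\omega_k}=p(c(\lambda)')$.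 For $k$-bounded partitions $\mu\subseteq\lambda$, $\lambda/\mu$ is a horizontal $k$-strip if no two of its cells share a column, and $\mu^{\omega_k}\subseteq\lambda^{\omega_k}$ with no two cells of $\lambda^{\omega_k}/\mu^{\omega_k}$ in the same row. For $k$-bounded $\alpha,\beta$, $\beta//\alpha$ is a horizontal $k$-composition strip of size $n$ if it is a horizontal composition strip of size $n$ and $\lambda(\beta)/\lambda(\alpha)$ is a horizontal $k$-strip. The non-commutative affine Schur functions $\{\mathbf{S}^{(k)}_\alpha\}_{\alpha\ k\text{-bounded}}$ form the unique basis of $\mathsf{NSym}_{(k)}$ with $\mathbf{S}^{(k)}_\emptyset=1$ and $H_i\mathbf{S}^{(k)}_\alpha=\sum_\beta\mathbf{S}^{(k)}_\beta$ for $1\le i\le k$, summed over $\beta$ with $\beta//\alpha$ a horizontal $k$-composition strip of size $i$. ($\mathbf{S}^{(k)}_\alpha$ is defined once $k$ is at least the largest part of $\alpha$.) *)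

(* Defs.v *)
(* NSym is modelled as the free associative Q-algebra on
   H_1, H_2, ...: an element is a finitely supported function from words
   (compositions) to rat, the word gamma standing for H_gamma_1 ... H_gamma_m. *)
From mathcomp Require Import all_boot all_order all_algebra.
From mathcomp Require Import boolp.
Set Implicit Arguments.
Unset Strict Implicit.
Unset Printing Implicit Defensive.
Import Order.TTheory GRing.Theory Num.Theory.
Local Open Scope ring_scope.

Definition composition (a : seq nat) : bool := all (fun x => (0 < x)%N) a.
Definition kbounded (k : nat) (a : seq nat) : bool := all (fun x => (x <= k)%N) a.

Fixpoint comps_aux (fuel m : nat) : seq (seq nat) :=
  match fuel with
  | 0 => if m == 0%N then [:: [::]] else [::]
  | fuel'.+1 =>
      if m == 0%N then [:: [::]]
      else flatten [seq [seq j :: c | c <- comps_aux fuel' (m - j)] | j <- iota 1 m]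
  end.
Definition comps (m : nat) : seq (seq nat) := comps_aux m m.

Definition lam (a : seq nat) : seq nat := sort geq a.

Definition nsym := seq nat -> rat.

Definition supported_on (Q : pred (seq nat)) (f : nsym) : Prop :=
  exists L : seq (seq nat), all Q L /\ forall w, f w != 0 -> w \in L.

Definition nsym_one : nsym := fun w => if w == [::] then 1 else 0.
Definition H (i : nat) : nsym := fun w => if w == [:: i] then 1 else 0.
Definition nsym_mul (f g : nsym) : nsym :=
  fun w => \sum_(j < (size w).+1) f (take j w) * g (drop j w).

Definition is_basis (P Q : pred (seq nat)) (B : seq nat -> nsym) : Prop :=
  [/\ (forall a, P a -> supported_on Q (B a)),
      (forall (L : seq (seq nat)) (c : seq nat -> rat),
          uniq L -> all P L ->
          (forall w, \sum_(a <- L) c a * B a w = 0) ->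
          forall a, a \in L -> c a = 0)
    & (forall f, supported_on Q f ->
          exists (L : seq (seq nat)) (c : seq nat -> rat),
            all P L /\ forall w, f w = \sum_(a <- L) c a * B a w)].

Definition t_op (i : nat) (a : seq nat) : option (seq nat) :=
  if i == 0%N then None
  else if i == 1%N then Some (1%N :: a)
  else if (i.-1 \in a) then Some (set_nth 0%N a (index i.-1 a) i) else None.

Definition apply_t (s : seq nat) (a : seq nat) : option (seq nat) :=
  foldl (fun o i => obind (t_op i) o) (Some a) s.

Definition hcstrip (n : nat) (b a : seq nat) : Prop :=
  exists s : seq nat,
    [/\ size s = n, all (fun i => (0 < i)%N) s, sorted ltn s & apply_t s a = Some b].

Definition partition (l : seq nat) : bool := sorted geq l && all (fun x => (0 < x)%N) l.
Definition is_cell (l : seq nat) (i j : nat) : bool := (i < size l)%N && (j < nth 0%N l i)%N.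
Definition conj_part (l : seq nat) : seq nat :=
  [seq count (fun r => (j < r)%N) l | j <- iota 0 (nth 0%N l 0)].
(* hook length of cell (i,j): arm + leg + 1 *)
Definition hook (l : seq nat) (i j : nat) : nat :=
  (nth 0%N l i - j.+1 + (nth 0%N (conj_part l) j - i.+1)).+1.
Definition is_core (m : nat) (l : seq nat) : Prop :=
  partition l /\ forall i j, is_cell l i j -> hook l i j != m.
(* p(kappa): row i counts cells of row i with hook length <= k
   (zero entries dropped, so the result is a partition) *)
Definition p_k (k : nat) (l : seq nat) : seq nat :=
  filter (fun x => (0 < x)%N)
    [seq count (fun j => (hook l i j <= k)%N) (iota 0 (nth 0%N l i)) | i <- iota 0 (size l)].
(* nu = lambda^{omega_k} = p(c(lambda)'), where c(lambda) is the (k+1)-core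
   kappa with p(kappa) = lambda *)
Definition kconj (k : nat) (lambda nu : seq nat) : Prop :=
  exists kappa, [/\ is_core k.+1 kappa, p_k k kappa = lambda & p_k k (conj_part kappa) = nu].

Definition part_le (m l : seq nat) : Prop := forall i, (nth 0%N m i <= nth 0%N l i)%N.
Definition skew_cell (l m : seq nat) (i j : nat) : bool := is_cell l i j && ~~ is_cell m i j.

Definition hkstrip (k : nat) (l m : seq nat) : Prop :=
  [/\ part_le m l,
      (forall i1 i2 j, skew_cell l m i1 j -> skew_cell l m i2 j -> i1 = i2)
    & exists mw lw, [/\ kconj k m mw, kconj k l lw, part_le mw lw &
        forall i j1 j2, skew_cell lw mw i j1 -> skew_cell lw mw i j2 -> j1 = j2]].

Definition hkcstrip (k n : nat) (b a : seq nat) : Prop :=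
  hcstrip n b a /\ hkstrip k (lam b) (lam a).

Definition is_ncSchur (S : seq nat -> nsym) : Prop :=
  [/\ S [::] = nsym_one,
      is_basis composition composition S
    & forall i a, (0 < i)%N -> composition a ->
        nsym_mul (H i) (S a) =
        (fun w => \sum_(b <- comps (sumn a + i) | `[< hcstrip i b a >]) S b w)].

Definition is_ncAffSchur (k : nat) (Sk : seq nat -> nsym) : Prop :=
  let P := fun a => composition a && kbounded k a in
  [/\ Sk [::] = nsym_one,
      is_basis P P Sk
    & forall i a, (0 < i <= k)%N -> P a ->
        nsym_mul (H i) (Sk a) =
        (fun w => \sum_(b <- comps (sumn a + i) | P b && `[< hkcstrip k i b a >]) Sk b w)].

(* Main.v *)
Require Import Defs.
From mathcomp Require Import all_boot all_order all_algebra.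
From mathcomp Require Import boolp zify.
Set Implicit Arguments.
Unset Strict Implicit.
Unset Printing Implicit Defensive.

Lemma comps_aux_sound fuel m b : b \in comps_aux fuel m -> composition b /\ sumn b = m.
Proof.
elim: fuel m b => [|f IH] m b /=.
  by case: eqP => // -> ; rewrite inE => /eqP ->.
case: eqP => [-> | _]; first by rewrite inE => /eqP ->.
case/flattenP => l /mapP [j]; rewrite mem_iota => /andP [j1 jm] -> /mapP [c /IH [cc sc] ->].
split; first by rewrite /composition /= j1.
by rewrite /= sc; apply: subnKC; rewrite -ltnS -(addn1 m) addnC.
Qed.

Lemma elem_le_sumn (s : seq nat) x : x \in s -> (x <= sumn s)%N.
Proof.
elim: s => //= y s IH; rewrite inE => /orP [/eqP -> | /IH h]; first exact: leq_addr.
exact: leq_trans h (leq_addl _ _).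
Qed.

Lemma size_le_sumn (s : seq nat) : composition s -> (size s <= sumn s)%N.
Proof.
elim: s => //= y s IH /andP [y0 /IH h]. by rewrite -add1n leq_add.
Qed.

Lemma comps_aux_complete fuel b : composition b -> (sumn b <= fuel)%N ->
  b \in comps_aux fuel (sumn b).
Proof.
elim: fuel b => [|f IH] [|x c] //=.
- move=> /andP [x0 _]; rewrite leqn0 addn_eq0 => /andP [/eqP x00]; by rewrite x00 in x0.
move=> /andP [x0 cc] hle.
have -> : (x + sumn c == 0)%N = false by rewrite addn_eq0 eqn0Ngt x0.
apply/flattenP; exists [seq x :: c0 | c0 <- comps_aux f (x + sumn c - x)].
  apply/mapP; exists x => //; rewrite mem_iota x0 /= add1n ltnS; exact: leq_addr.
apply/mapP; exists c => //; rewrite addKn; apply: IH => //.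
by rewrite -ltnS; apply: leq_trans hle; rewrite -add1n leq_add2r.
Qed.

Lemma comps_sound m b : b \in comps m -> composition b /\ sumn b = m.
Proof. exact: comps_aux_sound. Qed.
Lemma comps_complete b : composition b -> b \in comps (sumn b).
Proof. move=> h; exact: comps_aux_complete. Qed.

Lemma foldl_none s : foldl (fun o i => obind (t_op i) o) None s = None.
Proof. by elim: s. Qed.

Lemma apply_t_cons i s a :
  apply_t (i :: s) a = if t_op i a is Some a' then apply_t s a' else None.
Proof. rewrite /apply_t /=; case: (t_op i a) => //=; exact: foldl_none. Qed.

Lemma apply_t_rcons s i a : apply_t (rcons s i) a = obind (t_op i) (apply_t s a).
Proof. by rewrite /apply_t foldl_rcons. Qed.

Lemma t_op_shift h d i : (h.+1 < i)%N ->
  t_op i (h :: d) = omap (cons h) (t_op i d).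
Proof.
move=> hi; rewrite /t_op.
have -> : (i == 0%N) = false by apply/eqP; lia.
have -> : (i == 1%N) = false by apply/eqP; lia.
rewrite inE; have -> : (i.-1 == h) = false by apply/eqP; lia.
simpl; case: ifP => // _ /=.
by have -> : (h == i.-1) = false by apply/eqP; lia.
Qed.

Lemma apply_t_shift h s d : all (fun i => h.+1 < i)%N s ->
  apply_t s (h :: d) = omap (cons h) (apply_t s d).
Proof.
elim: s d => [|i s IH] d //= /andP [hi hs].
rewrite !apply_t_cons t_op_shift //; case: (t_op i d) => //= d'; exact: IH.
Qed.

Lemma t_op_size i a a' : (1 < i)%N -> t_op i a = Some a' -> size a' = size a.
Proof.
rewrite /t_op; case: i => // [[|i]] // _ /=.
case: ifP => // ha [<-]; rewrite size_set_nth; apply/maxn_idPr; by rewrite index_mem.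
Qed.

Lemma apply_t_size s a b : all (fun i => 1 < i)%N s -> apply_t s a = Some b -> size b = size a.
Proof.
elim: s a => [|i s IH] a /=; first by move=> _ [->].
move=> /andP [hi hs]; rewrite apply_t_cons; case E: (t_op i a) => [a'|] // /(IH _ hs) ->.
exact: t_op_size E.
Qed.

Lemma apply_t_head s m d b : sorted ltn s -> all (fun i => m < i)%N s -> (0 < m)%N ->
  apply_t s (m :: d) = Some b ->
  [/\ size b = (size d).+1, (head 0%N b <= m + size s)%N &
      (head 0%N b = m + size s -> b = (m + size s)%N :: d)].
Proof.
elim: s m d b => [|i s IH] m d b /=.
  by move=> _ _ _ [<-]; rewrite addn0.
move=> hp /andP [mi ms] m0.
have ss : sorted ltn s by exact: path_sorted hp.
have als : all (fun j => i < j)%N s by exact: order_path_min ltn_trans hp.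
case: (ltngtP i m.+1) => hi.
- by rewrite ltnS leqNgt mi in hi.
- have al : all (fun j => m.+1 < j)%N (i :: s).
    by rewrite /= hi /=; apply/allP => j /(allP als) /(ltn_trans hi).
  rewrite apply_t_shift //; case E: (apply_t _ d) => [b'|] //= [<-] /=.
  split.
  + by rewrite (apply_t_size _ E) //; apply/allP => j /(allP al); apply: leq_ltn_trans.
  + by rewrite leq_addr.
  + by move=> /eqP; rewrite -{1}(addn0 m) eqn_add2l.
- subst i; rewrite apply_t_cons.
  have -> : t_op m.+1 (m :: d) = Some (m.+1 :: d).
    rewrite /t_op /=; case: m m0 {IH ms als hp mi} => //= m _.
    by rewrite inE eqxx.
  move=> /(IH _ _ _ ss als (ltn0Sn _)) [h1 h2 h3]; split => //.
  + by rewrite addnS -addSn.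
  + by rewrite addnS -addSn.
Qed.
Definition colc (s : seq nat) j := count (fun r => j < r)%N s.

Lemma t_op_col i a a' j : t_op i a = Some a' -> colc a' j = (colc a j + (j.+1 == i))%N.
Proof.
rewrite /t_op /colc; case: i => // [[|i]] /=.
  by move=> [<-] /=; rewrite addnC; case: j.
case: ifP => // ha [<-].
have hi : (index i.+1 a < size a)%N by rewrite index_mem.
rewrite set_nthE hi.
have Ea : a = take (index i.+1 a) a ++ i.+1 :: drop (index i.+1 a).+1 a.
  by rewrite -[X in _ ++ X :: _](nth_index 0 ha) -drop_nth // cat_take_drop.
rewrite [in RHS]Ea.
rewrite !count_cat /=.
have e1 : ((j < i.+2) = (j < i.+1) + (j.+1 == i.+2) :> nat)%N.
  case: (ltngtP j i.+1) => h.
  - have -> : (j < i.+2)%N by lia.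
    by rewrite (_ : (j.+1 == i.+2) = false) //; apply/eqP; lia.
  - have -> : (j < i.+2)%N = false by lia.
    by rewrite (_ : (j.+1 == i.+2) = false) //; apply/eqP; lia.
  - by subst; rewrite ltnSn eqxx.
rewrite e1; lia.
Qed.

Lemma apply_t_col s a b j : apply_t s a = Some b -> colc b j = (colc a j + count_mem j.+1 s)%N.
Proof.
elim: s a => [|i s IH] a; first by move=> [<-]; rewrite addn0.
rewrite apply_t_cons; case E: (t_op i a) => [a'|] // /IH ->.
rewrite (t_op_col _ E) /= -addnA; congr (_ + _)%N; by rewrite eq_sym.
Qed.

Lemma hc_col n b a j : hcstrip n b a -> (colc a j <= colc b j <= (colc a j).+1)%N.
Proof.
case=> s [_ _ hs ha]; rewrite (apply_t_col _ ha) count_uniq_mem.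
  by rewrite leq_addr /=; case: (_ \in _) => /=; rewrite ?addn0 ?addn1.
exact: (sorted_uniq (leT:=ltn) ltn_trans ltnn hs).
Qed.

Lemma geq_tot : total (T:=nat) geq.
Proof. by move=> x y; apply: leq_total. Qed.
Lemma geq_tr : transitive (T:=nat) geq.
Proof. by move=> y x z h1 h2; apply: leq_trans h2 h1. Qed.

Lemma lam_perm s : perm_eq (lam s) s.
Proof. by rewrite /lam perm_sort. Qed.
Lemma lam_sorted s : sorted geq (lam s).
Proof. exact: (sort_sorted geq_tot). Qed.

Lemma sorted_nth_col l i j : sorted geq l -> (j < nth 0%N l i)%N = (i < colc l j)%N.
Proof.
elim: l i => [|x l IH] i /=; first by rewrite nth_nil.
move=> hp; have hl : sorted geq l by exact: path_sorted hp.
have al : all (fun y => y <= x)%N l by exact: (order_path_min geq_tr hp).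
have c0 : ~~ (j < x)%N -> colc l j = 0%N.
  move=> hjx; apply/eqP; rewrite -leqn0 leqNgt -has_count; apply/hasPn => y /(allP al) hy.
  by apply: contra hjx => /leq_trans; apply.
case: i => [|i] /=.
  case: (ltnP j x) => h //=; by rewrite c0 // -leqNgt.
rewrite IH //; case: (ltnP j x) => h /=; first by rewrite add1n ltnS.
by rewrite c0 -?leqNgt // add0n ltn0.
Qed.

Lemma col_perm s1 s2 j : perm_eq s1 s2 -> colc s1 j = colc s2 j.
Proof. by move/permP => h; apply: h. Qed.

Lemma lam_nth s i j : (j < nth 0%N (lam s) i)%N = (i < colc s j)%N.
Proof. by rewrite sorted_nth_col ?lam_sorted // (col_perm _ (lam_perm s)). Qed.

Lemma is_cellE l i j : is_cell l i j = (j < nth 0%N l i)%N.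
Proof.
rewrite /is_cell; case: (ltnP i (size l)) => h //=.
by rewrite nth_default.
Qed.

Lemma conj_lam_nth s j : nth 0%N (conj_part (lam s)) j = colc s j.
Proof.
rewrite /conj_part; case: (ltnP j (nth 0%N (lam s) 0)) => h.
  rewrite (nth_map 0%N) ?size_iota // nth_iota // add0n.
  exact: col_perm (lam_perm s).
rewrite nth_default ?size_map ?size_iota //.
apply/esym/eqP; rewrite -leqn0 leqNgt -lam_nth -leqNgt //.
Qed.

Lemma size_conj l : size (conj_part l) = nth 0%N l 0.
Proof. by rewrite /conj_part size_map size_iota. Qed.

Lemma conj_nth_le l j : (nth 0%N (conj_part l) j <= size l)%N.
Proof.
rewrite /conj_part; case: (ltnP j (nth 0%N l 0)) => h.
  by rewrite (nth_map 0%N) ?size_iota // count_size.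
by rewrite nth_default ?size_map ?size_iota.
Qed.

Lemma hook_le l i j : (j < nth 0%N l i)%N -> (hook l i j <= nth 0%N l i + size l)%N.
Proof.
move=> h; rewrite /hook; have := conj_nth_le l j; lia.
Qed.
Lemma pk_id k l : all (fun x => 0 < x)%N l ->
  (forall i j, (j < nth 0%N l i)%N -> (hook l i j <= k)%N) -> p_k k l = l.
Proof.
move=> hpos hh; rewrite /p_k.
have -> : [seq count (fun j => hook l i j <= k)%N (iota 0 (nth 0%N l i)) | i <- iota 0 (size l)]
          = mkseq (nth 0%N l) (size l).
  rewrite /mkseq; apply: eq_map => i.
  rewrite -[RHS](size_iota 0); apply/eqP; rewrite -all_count; apply/allP => j.
  by rewrite mem_iota add0n => /andP [_ /hh].
by rewrite mkseq_nth; apply/all_filterP.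
Qed.

Lemma nth_le_sumn (s : seq nat) i : (nth 0%N s i <= sumn s)%N.
Proof.
case: (ltnP i (size s)) => h; last by rewrite nth_default.
exact/elem_le_sumn/mem_nth.
Qed.

Lemma kconj_lam k s : composition s -> (2 * sumn s <= k)%N ->
  kconj k (lam s) (conj_part (lam s)).
Proof.
move=> cs hk.
have sl : sumn (lam s) = sumn s by apply: perm_sumn; apply: lam_perm.
have szl : size (lam s) = size s by rewrite /lam size_sort.
have szs := size_le_sumn cs.
have hb1 : forall i j, (j < nth 0%N (lam s) i)%N -> (hook (lam s) i j <= k)%N.
  move=> i j /hook_le h; apply: leq_trans h _.
  have := nth_le_sumn (lam s) i; rewrite sl szl; lia.
have posl : all (fun x => 0 < x)%N (lam s) by rewrite (perm_all _ (lam_perm s)).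
exists (lam s); split.
- split; first by rewrite /Defs.partition (lam_sorted s) posl.
  move=> i j; rewrite is_cellE => /hb1 h; apply/eqP => e; rewrite e in h; lia.
- exact: pk_id.
- apply: pk_id.
    apply/allP => x /mapP [j]; rewrite mem_iota add0n => /andP [_ hj] ->.
    by rewrite -(sorted_nth_col 0 j (lam_sorted s)).
  move=> i j /hook_le h; apply: leq_trans h _.
  rewrite conj_lam_nth size_conj.
  have := nth_le_sumn (lam s) 0; have := count_size (fun r => i < r)%N s.
  rewrite sl /colc; lia.
Qed.

Lemma hkstrip_of k b c :
  composition b -> composition c -> (2 * sumn b <= k)%N -> (2 * sumn c <= k)%N ->
  (forall j, colc c j <= colc b j <= (colc c j).+1)%N ->
  hkstrip k (lam b) (lam c).
Proof.
move=> cb cc hb hc hcol.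
split.
- move=> i; rewrite leqNgt; apply/negP => h.
  have := h; rewrite lam_nth => h2.
  have := hcol (nth 0%N (lam b) i) => /andP [h3 _].
  by have := leq_trans h2 h3; rewrite -lam_nth ltnn.
- move=> i1 i2 j; rewrite /skew_cell !is_cellE !lam_nth => /andP [a1 a2] /andP [b1 b2].
  have := hcol j; lia.
- exists (conj_part (lam c)), (conj_part (lam b)); split.
  + exact: kconj_lam.
  + exact: kconj_lam.
  + move=> j; rewrite !conj_lam_nth; by have /andP [] := hcol j.
  + move=> i j1 j2; rewrite /skew_cell !is_cellE !conj_lam_nth => /andP [a1 a2] /andP [b1 b2].
    have := hcol i; lia.
Qed.

Lemma hc_class x c b' : (0 < x)%N -> hcstrip x b' c -> b' != x :: c ->
  (size b' < (size c).+1)%N \/ (size b' = (size c).+1 /\ (head 0%N b' < x)%N).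
Proof.
move=> x0; case=> s [sz spos ssort ha] hne.
case: s sz spos ssort ha => [|i s] sz spos ssort ha.
  by rewrite -sz in x0.
have als : all (fun j => i < j)%N s by exact: order_path_min ltn_trans ssort.
have ss : sorted ltn s by exact: path_sorted ssort.
move: spos => /= /andP [i0 _].
case: (ltngtP i 1) => hi.
- by move: i0; rewrite ltnNge -ltnS hi.
- left; rewrite (apply_t_size _ ha) //.
  apply/allP => j; rewrite inE => /orP [/eqP -> //|/(allP als)]; exact: ltn_trans.
- subst i; move: ha; rewrite apply_t_cons /t_op /= => ha.
  have [h1 h2 h3] := apply_t_head ss als (ltn0Sn 0) ha.
  right; split => //.
  move: h2; rewrite -sz /= add1n leq_eqVlt => /orP [/eqP e|] //.
  by move: hne; rewrite (h3 (etrans e (esym (add1n _)))) -sz add1n eqxx.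
Qed.

Lemma sum_isolate (L : seq (seq nat)) (Q : pred (seq nat)) (F : seq nat -> rat) b :
  b \in L -> Q b -> (\sum_(b' <- L | Q b') F b' = 0)%R ->
  (forall b', b' \in L -> Q b' -> b' != b -> F b' = 0%R) -> F b = 0%R.
Proof.
move=> bL Qb hs hoth.
rewrite (bigID (fun b' => b' == b)) /= in hs.
have h2 : (\sum_(b' <- L | Q b' && ~~ (b' == b)) F b' = 0)%R.
  rewrite big_seq_cond; apply: big1 => b' /andP [b'L /andP [Qb' ne]]; exact: hoth.
rewrite h2 GRing.addr0 in hs.
rewrite (eq_bigr (fun _ => F b)) in hs; last by move=> b' /andP [_ /eqP ->].
rewrite big_const_seq in hs.
have cpos : (0 < count (fun b' => Q b' && (b' == b)) L)%N.
  by rewrite -has_count; apply/hasP; exists b => //; rewrite Qb eqxx.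
have e : forall n, iter n (GRing.add (F b)) 0%R = (F b *+ n)%R.
  by elim => //= n IH; rewrite IH GRing.mulrS.
move: hs; rewrite e => /eqP; rewrite Num.Theory.mulrn_eq0 => /orP [/eqP c0|/eqP //].
by rewrite c0 in cpos.
Qed.

Lemma apply_t_iota j d : apply_t (iota 1 j.+1) d = Some (j.+1 :: d).
Proof.
elim: j => [|j IH]; first by [].
rewrite -[j.+2]addn1 iotaD cats1 apply_t_rcons IH /= /t_op /=.
by rewrite inE eqxx /= addn1.
Qed.

Theorem mainTheorem4 (S : seq nat -> nsym) (Sk : nat -> seq nat -> nsym) :
  is_ncSchur S ->
  (forall k, (0 < k)%N -> is_ncAffSchur k (Sk k)) ->
  forall a, composition a ->
    exists K : nat, forall k, (K <= k)%N -> Sk k a = S a.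
Proof.
move=> [hS1 _ hS3] hSk a ca.
exists (2 * sumn a).+1 => k hk.
have k0 : (0 < k)%N by apply: leq_trans hk.
have [hk1 _ hk3] := hSk k k0.
set N := sumn a.
have claim : forall n, (n <= N)%N -> forall b, composition b -> sumn b = n -> Sk k b = S b.
  elim/ltn_ind => n IHn nN.
  have IHs : forall m b, composition b -> sumn b = n -> size b = m -> Sk k b = S b.
    elim/ltn_ind => m IHm.
    have IHh : forall h b, composition b -> sumn b = n -> size b = m -> head 0%N b = h -> Sk k b = S b.
      elim/ltn_ind => h IHh [|x c] cb sb szb hb.
        by rewrite hS1 hk1.
      move: cb => /andP [x0 cc].
      have sb' : (x + sumn c = n)%N := sb.
      have xk : (x <= k)%N by lia.
      have Ec : Sk k c = S c.
        apply: (IHn (sumn c)) => //; lia.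
      have ckb : kbounded k c.
        apply/allP => y /elem_le_sumn hy; lia.
      have E1 := hS3 x c x0 cc.
      have E2 := hk3 x c (introT andP (conj x0 xk)) (introT andP (conj cc ckb)).
      rewrite Ec E1 in E2.
      apply: funext => w.
      have cc' : composition c := cc.
      have E := congr1 (fun f => f w) E2; simpl in E.
      set L := comps (sumn c + x) in E.
      have cond : forall b', b' \in L -> hcstrip x b' c ->
          composition b' && kbounded k b' && `[< hkcstrip k x b' c >].
        move=> b' /comps_sound [cb' sb''] hc.
        have s2 : (2 * sumn b' <= k)%N by lia.
        rewrite cb' /=; apply/andP; split.
          by apply/allP => y /elem_le_sumn hy; lia.
        apply/asboolP; split => //; apply: hkstrip_of => //; first lia.
        move=> j; exact: hc_col hc.
      have bL : x :: c \in L by rewrite /L addnC; apply: (comps_complete (b:=x :: c)); rewrite /composition /= x0.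
      have Qb : `[< hcstrip x (x :: c) c >].
        apply/asboolP; exists (iota 1 x); split.
        - by rewrite size_iota.
        - by apply/allP => y; rewrite mem_iota => /andP [].
        - exact: iota_ltn_sorted.
        - by rewrite -(prednK x0) apply_t_iota prednK.
      apply/esym/eqP; rewrite -GRing.subr_eq0; apply/eqP.
      pose F := fun b' => (S b' w - Sk k b' w)%R.
      apply: (@sum_isolate L (fun b' => `[< hcstrip x b' c >]) F (x :: c)) => //.
      - rewrite /F GRing.sumrB E; apply/eqP; rewrite GRing.subr_eq0; apply/eqP.
        rewrite [RHS]big_seq_cond [LHS]big_seq_cond; apply: eq_bigl => b'.
        case bL' : (b' \in L) => //=.
        case: (boolP `[< hcstrip x b' c >]) => hc.
          by move/asboolP: (hc) => hc'; rewrite (cond _ bL' hc').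
        apply/negbTE; apply: contra hc => /andP [_ /asboolP [hh _]]; exact/asboolP.
      - move=> b' b'L /asboolP hc hne; rewrite /F.
        have [cb' sb''] := comps_sound b'L.
        suff -> : Sk k b' = S b' by rewrite GRing.subrr.
        case: (hc_class x0 hc hne) => [hsz|[hsz hhd]].
        + apply: (IHm (size b')) => //; [by rewrite -szb | lia].
        + apply: (IHh (head 0%N b')) => //; [by rewrite -hb | lia | by rewrite -szb].
    by move=> b cb sb sz; exact: (IHh (head 0%N b)).
  by move=> b cb sb; exact: (IHs (size b)).
exact: (claim N (leqnn _) a ca).
Qed.
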